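(* Let $n$ be a prime number, let $S\subseteq\{1,2,\ldots,\lfloor n/2\rfloor\}$, let $G=C_n(S)$ be the circulant graph on $S$, and let $\Delta=\Delta(G)$ be its independence complex. Then for every integer $k$ with $1\le k\le\dim\Delta$, the simplicial complex $\Delta^{[k]}$ is connected.
   Context: For $k\in\mathbb{Z}$ write $|k|_n=\min\{|k|,\,n-|k|\}$. The circulant graph $C_n(S)$ has vertex set $\mathbb{Z}_n=\{0,1,\ldots,n-1\}$ and edge set $\{\{i,j\} : |j-i|_n\in S\}$. The independence complex $\Delta(G)$ is the simplicial complex on $V(G)$ whose faces are the independent sets of $G$; the dimension of a face $F$ is $|F|-1$ and $\dim\Delta$ is the maximum dimension of a face. For $0\le k\le\dim\Delta$, $\Delta^{[k]}$ is the pure simplicial complex whose facets are exactly the faces of $\Delta$ of dimension $k$. A simplicial complex is connected if the graph formed by its vertices and its $1$-dimensional faces is connected. *)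

(* Defs.v *)
From mathcomp Require Import all_boot.
Set Implicit Arguments. Unset Strict Implicit. Unset Printing Implicit Defensive.

(* Vertex set Z_n is represented by 'I_n. *)

Definition cdist (n : nat) (i j : 'I_n) : nat :=
  let d := maxn i j - minn i j in minn d (n - d).

Definition circ_adj (n : nat) (S : pred nat) (i j : 'I_n) : bool :=
  S (cdist i j).

(* independent sets of C_n(S) = faces of the independence complex *)
Definition indep (n : nat) (S : pred nat) (F : {set 'I_n}) : bool :=
  [forall x in F, forall y in F, ~~ circ_adj S x y].

Definition indep_dim (n : nat) (S : pred nat) : nat :=
  (\max_(F : {set 'I_n} | indep S F) #|F|) - 1.

Definition kface (n : nat) (S : pred nat) (k : nat) (F : {set 'I_n}) : bool :=
  indep S F && (#|F| == k.+1).

Definition skel_vertex (n : nat) (S : pred nat) (k : nat) (v : 'I_n) : bool :=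
  [exists F : {set 'I_n}, kface S k F && (v \in F)].

(* 1-dimensional faces of Delta^[k] (for k >= 1): pairs {u,v} contained in a k-face *)
Definition skel_edge (n : nat) (S : pred nat) (k : nat) : rel 'I_n :=
  fun u v => [exists F : {set 'I_n}, [&& kface S k F, u \in F, v \in F & u != v]].

(* Delta^[k] is connected: its 1-skeleton graph is connected *)
Definition skel_connected (n : nat) (S : pred nat) (k : nat) : Prop :=
  forall u v : 'I_n, skel_vertex S k u -> skel_vertex S k v ->
    connect (skel_edge S k) u v.

(* Main.v *)
Require Import Defs.
From mathcomp Require Import all_boot.
From mathcomp Require Import zify.

Section Shift.
Variable n : nat.
Hypothesis hn : 0 < n.

Definition sh (t : nat) (x : 'I_n) : 'I_n := Ordinal (ltn_pmod (x + t) hn).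

Lemma sh_val t x : val (sh t x) = (x + t) %% n.
Proof. by []. Qed.

Lemma mod2 a : a < n + n -> a %% n = if a < n then a else a - n.
Proof.
move=> h; case: ifP => h1; first by rewrite modn_small.
have -> : a = (a - n) + n by lia.
by rewrite modnDr modn_small; lia.
Qed.

Lemma cdist_sh t x y : cdist (sh t x) (sh t y) = cdist x y.
Proof.
rewrite /cdist !sh_val -(modnDmr x t) -(modnDmr y t).
have ht : t %% n < n by rewrite ltn_pmod.
have hx := ltn_ord x; have hy := ltn_ord y.
move: (t %% n) ht => t' ht.
rewrite !mod2; try lia.
case: ifP; case: ifP; lia.
Qed.

Lemma sh_inj t : injective (sh t).
Proof.
move=> x y /(congr1 val); rewrite !sh_val => /eqP.
rewrite eqn_modDr !modn_small // => /eqP h; exact: val_inj.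
Qed.

Lemma sh_add t1 t2 x : sh t1 (sh t2 x) = sh (t2 + t1) x.
Proof. by apply: val_inj; rewrite !sh_val modnDml addnA. Qed.

Lemma kface_sh S k F t : kface S k F -> kface S k (sh t @: F).
Proof.
case/andP=> hi hc; apply/andP; split; last by rewrite card_imset //; exact: sh_inj.
apply/forallP=> x'; apply/implyP=> /imsetP [x hx ->].
apply/forallP=> y'; apply/implyP=> /imsetP [y hy ->].
rewrite /circ_adj cdist_sh.
by move/forallP: hi => /(_ x) /implyP /(_ hx) /forallP /(_ y) /implyP /(_ hy).
Qed.

Lemma edge_sh S k u v t : skel_edge S k u v -> skel_edge S k (sh t u) (sh t v).
Proof.
case/existsP=> F /and4P [hF hu hv huv]; apply/existsP; exists (sh t @: F).
rewrite kface_sh // !imset_f //=; apply: contra huv => /eqP /sh_inj ->; done.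
Qed.

End Shift.

Theorem lemma3p2 (n : nat) (S : pred nat) :
  prime n ->
  (forall s, S s -> 1 <= s <= n./2) ->
  forall k : nat, 1 <= k <= indep_dim n S -> skel_connected n S k.
Proof.
move=> pn hS k /andP [k1 kd] u v _ _.
have hn : 0 < n by exact: prime_gt0.
have [F hF] : exists F : {set 'I_n}, indep S F && (k < #|F|).
  suff /existsP [F hF] : [exists F : {set 'I_n}, indep S F && (k < #|F|)] by exists F.
  apply: contraT => /existsPn hno.
  have : \max_(F : {set 'I_n} | indep S F) #|F| <= k.
    apply/bigmax_leqP => F hF; move: (hno F); rewrite hF /=; lia.
  rewrite /indep_dim in kd => hle; exfalso; lia.
case/andP: hF => hFi hFc.
have : 0 < #|[set A : {set 'I_n} | A \subset F & #|A| == k.+1]|.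
  by rewrite cards_draws bin_gt0.
case/card_gt0P => G; rewrite inE => /andP [hGF hGc].
have hGi : indep S G.
  apply/forallP=> x; apply/implyP=> hx; apply/forallP=> y; apply/implyP=> hy.
  move/forallP: hFi => /(_ x) /implyP.
  move/subsetP: hGF => hsub.
  by move=> /(_ (hsub _ hx)) /forallP /(_ y) /implyP /(_ (hsub _ hy)).
have hGk : kface S k G by rewrite /kface hGi.
have [a [b [ha hb hab]]] : exists a b, [/\ a \in G, b \in G & a != b].
  have : 1 < #|G| by rewrite (eqP hGc); lia.
  by case/card_gt1P => a [b [? ? ?]]; exists a, b.
have eab : skel_edge S k a b by apply/existsP; exists G; rewrite hGk ha hb hab.
set d := (b + n - a) %% n.
have hbd : b = @sh n hn d a.
  apply: val_inj; rewrite sh_val /d modnDmr.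
  have -> : a + (b + n - a) = b + n by have := ltn_ord a; lia.
  by rewrite modnDr modn_small.
have ex0 : forall t, skel_edge S k (@sh n hn t a) (@sh n hn d (@sh n hn t a)).
  move=> t; rewrite sh_add addnC -sh_add -hbd; exact: edge_sh.
have ex : forall x, skel_edge S k x (@sh n hn d x).
  move=> x; have hx : @sh n hn (x + n - a) a = x.
    apply: val_inj; rewrite sh_val.
    have -> : a + (x + n - a) = x + n by have := ltn_ord a; lia.
    by rewrite modnDr modn_small.
  by have := ex0 (x + n - a); rewrite hx.
have cm : forall m, connect (skel_edge S k) u (@sh n hn (m * d) u).
  elim=> [|m IH].
    have -> : @sh n hn (0 * d) u = u by apply: val_inj; rewrite sh_val addn0 modn_small.
    exact: connect0.
  apply: connect_trans IH _; apply: connect1.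
  by rewrite mulSnr -sh_add.
have hd0 : 0 < d.
  rewrite lt0n; apply/negP => /eqP hd; move: hab; rewrite hbd hd.
  have -> : @sh n hn 0 a = a by apply: val_inj; rewrite sh_val addn0 modn_small.
  by rewrite eqxx.
have hdn : d < n by rewrite ltn_pmod.
have cop : coprime n d.
  rewrite prime_coprime //; apply/negP => /dvdn_leq; lia.
case: (Bezoutl d hn) => c _; rewrite (eqP cop) => /dvdnP [q hq].
set w := u + n - v.
have -> : v = @sh n hn (c * w * d) u.
  apply: val_inj; rewrite sh_val -(modnDr (u + _)).
  have -> : u + c * w * d + n = v + w * (1 + c * d).
    have := ltn_ord v; rewrite /w; nia.
  by rewrite hq mulnA addnC modnMDl modn_small.
exact: cm.
Qed.
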